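(* Let $D=(V,A)$ be a strongly connected oriented graph. The following two conditions are equivalent: (1) for every vertex $x$, the out-neighbourhood $x^+$ induces a tournament and the in-neighbourhood $x^-$ induces an acyclic digraph; (2) there exists a cyclic order of $V$ such that for every arc $xy\in A$ and every vertex $z\in\,]x,y[$, we have $zy\in A$.
   Context: All digraphs are finite, with no loops and no parallel arcs. A digon is a pair of arcs $xy,yx$; an oriented graph is a digraph with no digon. For a vertex $x$, $x^+=\{y: xy\in A\}$ and $x^-=\{y: yx\in A\}$. A digraph is strongly connected (strong) if there is a directed path between every ordered pair of vertices. A tournament is an oriented graph in which any two distinct vertices are joined by an arc. A linear order $(v_1,\dots,v_n)$ of $V$ is equivalent to each of its cyclic shifts $(v_k,\dots,v_n,v_1,\dots,v_{k-1})$; an equivalence class is a cyclic order. For vertices $v_i,v_j$, the cyclic interval $[v_i,v_j]$ is $\{v_k: i\le k\le j\}$ if $i<j$ and $\{v_k: k\notin\,]j,i[\}$ if $i\ge j$ (this depends only on the cyclic order), and $]v_i,v_j[=[v_i,v_j]\setminus\{v_i,v_j\}$. *)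

(* Defs.v *)
From mathcomp Require Import all_boot.
Set Implicit Arguments.
Unset Strict Implicit.
Unset Printing Implicit Defensive.

(* A digraph on a finite vertex type V is given by its arc relation A : rel V
   (no parallel arcs by construction). *)

Definition oriented_graph (V : finType) (A : rel V) : Prop :=
  (forall x, ~~ A x x) /\ (forall x y, A x y -> ~~ A y x).

Definition strongly_connected (V : finType) (A : rel V) : Prop :=
  forall x y, connect A x y.

Definition out_nb (V : finType) (A : rel V) (x : V) : {set V} := [set y | A x y].
Definition in_nb (V : finType) (A : rel V) (x : V) : {set V} := [set y | A y x].

(* The subdigraph induced by S is a tournament (it is already oriented as
   a subgraph of an oriented graph): any two distinct vertices are joined. *)
Definition induces_tournament (V : finType) (A : rel V) (S : {set V}) : Prop :=
  {in S &, forall y z, y != z -> A y z || A z y}.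

Definition induces_acyclic (V : finType) (A : rel V) (S : {set V}) : Prop :=
  forall s : seq V, s != [::] -> all (fun v => v \in S) s -> ~~ cycle A s.

(* A cyclic order is represented by a linear order s (a duplicate-free
   enumeration of all vertices); the open cyclic interval ]x,y[ w.r.t. s,
   with i, j, k the positions of x, y, z:
   if i < j : i < k < j ; if i >= j : k > i or k < j. *)
Definition linear_order_of (V : finType) (s : seq V) : Prop :=
  uniq s /\ forall v : V, v \in s.

Definition in_open_interval (V : finType) (s : seq V) (x y z : V) : bool :=
  let i := index x s in let j := index y s in let k := index z s in
  if i < j then (i < k) && (k < j) else (i < k) || (k < j).

(* Main.v *)
Require Import Defs.
From mathcomp Require Import all_boot zify.
From Stdlib Require Import Classical.
Set Implicit Arguments. Unset Strict Implicit. Unset Printing Implicit Defensive.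
Section Ext.
Variable V : finType.

Lemma Ext (e : rel V) (P : pred V) v0 : P v0 ->
  (forall v, P v -> exists2 w, P w & e v w) ->
  exists c : seq V, [/\ c != [::], all P c & cycle e c].
Proof.
move=> Pv0 Hs.
pose f v := if [pick w | P w && e v w] is Some w then w else v.
have fP v : P v -> P (f v) && e v (f v).
  move=> Pv; rewrite /f; case: pickP => [w //|H].
  by have [w Pw evw] := Hs v Pv; move: (H w); rewrite Pw evw.
have iterP j v : P v -> P (iter j f v).
  by move=> Pv; elim: j => //= j IH; case/andP: (fP _ IH).
have := looping_order f v0; case/trajectP => i lti eqi.
set y := iter i f v0.
have Py : P y by exact: iterP.
have cyc : fcycle f (orbit f y).
  apply/(orbitPcycle 3 0); exists (order f v0 - i).-1.
  rewrite prednK ?subn_gt0 // /y -iterD subnK ?(ltnW lti) //.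
exists (orbit f y); split.
- by apply/eqP => E; have := in_orbit f y; rewrite E.
- by apply/allP => w; rewrite -fconnect_orbit => /iter_findex <-; apply: iterP.
- apply: (sub_in_cycle (P := P) _ _ cyc).
    by move=> a b Pa _ /eqP <-; case/andP: (fP _ Pa).
  by apply/allP => w; rewrite -fconnect_orbit => /iter_findex <-; apply: iterP.
Qed.
End Ext.

Section Dir21.
Variables (V : finType) (A : rel V).
Hypothesis Hor : oriented_graph A.
Variable s : seq V.
Hypothesis Hlin : linear_order_of s.
Hypothesis HP : forall x y z : V, A x y -> in_open_interval s x y z -> A z y.

Lemma idx_neq x y : x != y -> index x s != index y s.
Proof.
case: Hlin => _ Hin; apply: contra => /eqP E.
by rewrite -(nth_index x (Hin x)) E nth_index.
Qed.

Lemma idx_lt x : index x s < size s.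
Proof. by rewrite index_mem; case: Hlin. Qed.

Lemma dir21_tour x : induces_tournament A (out_nb A x).
Proof.
move=> y z; rewrite !inE => Hy Hz nyz.
have nxy : x != y by apply: contraTneq Hy => ->; case: Hor => ->.
have nxz : x != z by apply: contraTneq Hz => ->; case: Hor => ->.
have := idx_neq nxy; have := idx_neq nxz; have := idx_neq nyz.
move=> h1 h2 h3.
have : in_open_interval s x y z || in_open_interval s x z y.
  rewrite /in_open_interval; case: ifP; case: ifP => *; lia.
by case/orP => [/(HP Hy) -> | /(HP Hz) ->]; rewrite ?orbT.
Qed.

Lemma dir21_acyc x : induces_acyclic A (in_nb A x).
Proof.
move=> c nc Hall; apply/negP => Hc.
pose r v := if index x s < index v s then index v s - index x s
            else index v s + size s - index x s.
have key : {in in_nb A x &, subrel A (fun a b => r a < r b)}.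
  move=> y z; rewrite !inE => Hy Hz Hyz.
  have nyz : y != z by apply: contraTneq Hyz => ->; case: Hor => ->.
  have nxy : y != x by apply: contraTneq Hy => ->; case: Hor => ->.
  have nxz : z != x by apply: contraTneq Hz => ->; case: Hor => ->.
  have := idx_neq nxy; have := idx_neq nxz; have := idx_neq nyz.
  have := idx_lt x; have := idx_lt y; have := idx_lt z.
  move=> l1 l2 l3 h1 h2 h3.
  rewrite /r; case: (boolP (in_open_interval s y z x)) => [/(HP Hyz) Hxz|].
    by case: Hor => _ /(_ _ _ Hz); rewrite Hxz.
  rewrite /in_open_interval; do 3 case: ifP => ? ; lia.
have := sub_in_cycle key Hall Hc.
case: c nc {Hall Hc} => // a l _ /=.
move=> H; have : path (relpre r ltn) a (rcons l a) by []; rewrite -path_map => /(order_path_min ltn_trans).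
by rewrite map_rcons all_rcons ltnn.
Qed.
End Dir21.

Section Dir12.
Variables (V : finType) (A : rel V).
Hypothesis Hirr : forall x, ~~ A x x.
Hypothesis Hanti : forall x y, A x y -> ~~ A y x.
Hypothesis Htour : forall x y z, A x y -> A x z -> y != z -> A y z || A z y.
Hypothesis Hacyc : forall y c, c != [::] -> all (fun v => A v y) c -> ~~ cycle A c.
Hypothesis Hstrong : forall x y, connect A x y.

Lemma lemG (Z : seq V) u z : cycle A Z -> u \notin Z -> z \in Z -> A z u ->
  exists c, exists c', [/\ c \in Z, c' \in Z, A c c', A c u & A u c'].
Proof.
move=> cZ uZ zZ Azu.
case: (boolP [exists c, exists c', [&& c \in Z, c' \in Z, A c c', A c u & A u c']]).
  by case/existsP => c /existsP [c' /and5P [*]]; exists c, c'.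
move=> /existsPn H; exfalso.
have Hs : forall w, (w \in Z) && A w u -> exists2 w', (w' \in Z) && A w' u & A w w'.
  move=> w /andP [wZ Awu]; exists (next Z w); last exact: next_cycle.
  rewrite mem_next wZ /=.
  have Awn := next_cycle cZ wZ.
  have nun : u != next Z w by apply: contraNneq uZ => ->; rewrite mem_next.
  case/orP: (Htour Awu Awn nun) => // Aun.
  by move: (H w) => /existsPn /(_ (next Z w)); rewrite wZ mem_next wZ Awn Awu Aun.
have [c [nc allc cc]] := Ext (e:=A) (P := fun w => (w \in Z) && A w u) (v0:=z) (introT andP (conj zZ Azu)) Hs.
suff : ~~ cycle A c by rewrite cc.
apply: (Hacyc (y:=u) nc).
by apply: sub_all allc => w /andP [].
Qed.

Lemma source x y : A x y -> exists s, A x s /\ forall w, A x w -> w != s -> A s w.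
Proof.
move=> Axy.
case: (boolP [exists s, A x s && [forall w, A x w ==> (w != s) ==> A s w]]).
  case/existsP => s /andP [Axs /forallP H]; exists s; split => // w Axw nws.
  by move: (H w); rewrite Axw nws.
move=> /existsPn H; exfalso.
have Hs : forall v, A x v -> exists2 w, A x w & A w v.
  move=> v Axv; move: (H v); rewrite Axv /= => /forallPn [w].
  rewrite negb_imply => /andP [Axw]; rewrite negb_imply => /andP [nwv nAvw].
  exists w => //; move: (Htour Axv Axw (ltac:(by rewrite eq_sym))).
  by rewrite (negbTE nAvw).
have [Z0 [nZ0 allZ0 cZ0]] := Ext (e := fun a b => A b a) (P := A x) (v0 := y) Axy Hs.
set Z := rev Z0.
have cZ : cycle A Z by rewrite rev_cycle.
have allZ : forall v, v \in Z -> A x v by move=> v; rewrite mem_rev => /(allP allZ0).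
have [z zZ0] : exists z, z \in Z0.
  by case: (Z0) nZ0 => // a l _; exists a; rewrite mem_head.
have zZ : z \in Z by rewrite mem_rev.
have [p pth lst] := connectP (Hstrong z x).
move: {2}(size p) (erefl (size p)) => m.
clear zZ0; elim/ltn_ind: m z zZ p pth lst => m IH z zZ p pth lst szp.
have Axz := allZ z zZ.
case: p pth lst szp => [_ /= E|u1 q]; first by move: Axz; rewrite -E (negbTE (Hirr x)).
rewrite /= => /andP [Azu1 pq] lq szp.
have u1Z : u1 \notin Z.
  apply/negP => u1Z; apply: (IH (size q) _ u1 u1Z q pq lq erefl).
  by rewrite -szp.
have [c [c' [cZ' c'Z Acc' Acu1 Au1c']]] := lemG cZ u1Z zZ Azu1.
have claim : forall q0 u, path A u q0 -> x = last u q0 -> size q0 < m -> A u c' ->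
    all (fun w => A w c') q0.
  elim=> [//|w q' IHq] u /= /andP [Auw pq'] lq' szq Auc'.
  have szq' : size q' < m by apply: ltn_trans szq.
  have nwc : w != c'.
    apply/eqP => E; apply: (IH (size q') szq' c' c'Z q' _ _ erefl).
      by rewrite -E.
    by rewrite -E.
  have nAcw : ~~ A c' w.
    apply/negP => Acw; apply: (IH (size q').+1 szq c' c'Z (w :: q') _ lq' erefl).
    by rewrite /= Acw.
  move: (Htour Auw Auc' nwc); rewrite (negbTE nAcw) orbF => Awc.
  by rewrite Awc /=; apply: (IHq w).
have allq := claim q u1 pq lq (ltac:(by rewrite -szp)) Au1c'.
suff : ~~ cycle A (c :: u1 :: q).
  by rewrite /= rcons_path /= Acu1 pq -lq allZ.
apply: (Hacyc (y := c')) => //.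
by rewrite /= Acc' Au1c' allq.
Qed.

Definition succ x := if [pick y | A x y && [forall w, A x w ==> (w != y) ==> A y w]]
  is Some y then y else x.

Lemma succP x y : A x y -> A x (succ x) /\ forall w, A x w -> w != succ x -> A (succ x) w.
Proof.
move=> Axy; rewrite /succ; case: pickP => [s /andP [Axs /forallP H]|H].
  by split => // w Axw nw; move: (H w); rewrite Axw nw.
exfalso; have [s [Axs Hs]] := source Axy.
have : A x s && [forall w, A x w ==> (w != s) ==> A s w].
  rewrite Axs; apply/forallP => w; apply/implyP => Axw; apply/implyP; exact: Hs.
by rewrite H.
Qed.

Lemma lemO x y : A x y -> forall j, (forall i, 0 < i <= j -> iter i succ x != y) ->
  A (iter j succ x) y.
Proof.
move=> Axy; elim=> [//|j IH] H.
have Ajy : A (iter j succ x) y.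
  apply: IH => i /andP [i0 ij]; apply: H; rewrite i0 /=; exact: leq_trans ij (leqnSn j).
have [_ Hs] := succP Ajy.
rewrite iterS; apply: Hs Ajy _; rewrite eq_sym -iterS; apply: H; by rewrite /= leqnn.
Qed.

Lemma lemO' x y : A x y -> exists k, 0 < k /\ iter k succ x = y.
Proof.
move=> Axy; case: (classic (exists k, 0 < k /\ iter k succ x = y)) => // Hn; exfalso.
have Hall : forall j, A (iter j succ x) y.
  move=> j; apply: lemO => // i /andP [i0 _]; apply/eqP => E; apply: Hn; by exists i.
have HA : forall v, fconnect succ x v -> A v y.
  by move=> v Hv; rewrite -(iter_findex Hv).
have Hs : forall v, fconnect succ x v -> exists2 w, fconnect succ x w & A v w.
  move=> v Hv; exists (succ v); first exact: connect_trans Hv (fconnect1 _ _).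
  by case: (succP (HA v Hv)).
have [c [nc allc cc]] := Ext (e := A) (P := fconnect succ x) (v0 := x) (connect0 (frel succ) x) Hs.
suff : ~~ cycle A c by rewrite cc.
apply: (Hacyc (y := y) nc); by apply: sub_all allc.
Qed.

Lemma conn x v : fconnect succ x v.
Proof.
have [p pth ->] := connectP (Hstrong x v).
elim: p x pth => [|w p IH] x /=; first by move=> _; exact: connect0.
case/andP => Axw pw; apply: connect_trans (IH _ pw).
have [k [_ <-]] := lemO' Axw; exact: fconnect_iter.
Qed.

Lemma dir12 : exists s, linear_order_of s /\
  forall x y z, A x y -> in_open_interval s x y z -> A z y.
Proof.
case: (pickP (fun _ : V => true)) => [x0 _|H0]; last first.
  by exists [::]; split; [split => // v; have := H0 v | move=> x; have := H0 x].
set n := #|V|.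
set s := orbit succ x0.
have ord : order succ x0 = n by rewrite /order; apply: eq_card => v; rewrite !inE; apply: conn.
have sz : size s = n by rewrite size_orbit ord.
have uq : uniq s := orbit_uniq succ x0.
have mem : forall v, v \in s by move=> v; rewrite -fconnect_orbit conn.
have itn : iter n succ x0 = x0 by rewrite -ord; apply/(orbitPcycle 2 4); exact: conn.
have nthI : forall i, i < n -> nth x0 s i = iter i succ x0.
  by move=> i lt; rewrite /s /orbit nth_traject // ord.
have idxI : forall i, i < n -> index (iter i succ x0) s = i.
  by move=> i lt; rewrite -nthI // index_uniq // sz.
have idxlt : forall v, index v s < n by move=> v; rewrite -sz index_mem.
have vI : forall v, iter (index v s) succ x0 = v by move=> v; rewrite -nthI ?nth_index.
have wrap : forall t y, t < n + n -> iter t succ x0 = y -> t = index y s \/ t = index y s + n.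
  move=> t y lt E; case: (ltnP t n) => tn; first by left; rewrite -E idxI.
  right; have E' : iter (t - n) succ x0 = y by rewrite -E -{2}(subnK tn) iterD itn.
  have := idxI (t - n) (ltac:(lia)); rewrite E' => ->; lia.
exists s; split; first by split.
move=> x y z Axy.
have nxy : x != y by apply: contraTneq Axy => ->; rewrite (negbTE (Hirr y)).
have dxy : index x s != index y s by apply: contra nxy => /eqP E; rewrite -(vI x) E vI.
have lx := idxlt x; have ly := idxlt y; have lz := idxlt z.
rewrite /in_open_interval => Hint.
have [j [Ej jn]] : exists j, (j + index x s = index z s \/ j + index x s = index z s + n) /\ j < n.
  exists (if index x s < index z s then index z s - index x s else index z s + n - index x s).
  move: Hint; case: ifP => ? Hint; case: ifP => ?; lia.
have Ez : iter j succ x = z.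
  rewrite -(vI x) -iterD; case: Ej => ->; first exact: vI.
  by rewrite iterD itn vI.
rewrite -Ez; apply: lemO => // i /andP [i0 ij]; apply/eqP => E.
have : iter (i + index x s) succ x0 = y by rewrite iterD vI.
move/(wrap (i + index x s) y (ltac:(lia))) => Hw.
move: Hint; case: ifP => ? Hint; lia.
Qed.
End Dir12.

Theorem theorem2p1 (V : finType) (A : rel V) :
  oriented_graph A -> strongly_connected A ->
  ((forall x : V, induces_tournament A (out_nb A x) /\
                  induces_acyclic A (in_nb A x)) <->
   (exists s : seq V, linear_order_of s /\
      forall x y z : V, A x y -> in_open_interval s x y z -> A z y)).
Proof.
move=> Hor Hstr; split.
- move=> H; case: (Hor) => Hirr Hanti; apply: (dir12 Hirr) => //.
  + move=> x y z Axy Axz nyz; apply: (proj1 (H x)) => //; by rewrite inE.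
  + move=> y c nc Hall; apply: (proj2 (H y)) nc _.
    by apply: sub_all Hall => v; rewrite inE.
- case=> s [Hlin HP] x; split; [exact: (@dir21_tour _ _ Hor _ Hlin HP x) | exact: (@dir21_acyc _ _ Hor _ Hlin HP x)].
Qed.
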